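(* Let $M$ be a universal semi-POVM and let $m$ be a universal probability. Then there is a real $c>0$ such that for all $s\in\Sigma^*$, $c\,M(s)\leqslant m(s)I$ and $c\,m(s)I\leqslant M(s)$.
   Context: $N$ is a fixed positive integer; $\Sigma^*$ is the set of finite binary strings. $\mathrm{Her}(N)$ is the set of $N\times N$ Hermitian matrices and $\mathrm{Her}_Q(N)$ those with entries in $\{a+ib:a,b\in\mathbb{Q}\}$; $A\leqslant B$ means $B-A$ is positive semi-definite. A lower-computable semi-measure is a function $r:\Sigma^*\to[0,\infty)$ with $\sum_s r(s)\le 1$ such that there is a total recursive $f:\mathbb{N}\times\Sigma^*\to\mathbb{Q}$ with $\lim_{n}f(n,s)=r(s)$ and $f(n,s)\le f(n+1,s)$ for all $n,s$. A universal probability is a lower-computable semi-measure $m$ such that for every lower-computable semi-measure $r$ there is $c>0$ with $c\,r(s)\le m(s)$ for all $s$. A semi-POVM on $\Sigma^*$ is a map $R:\Sigma^*\to\mathrm{Her}(N)$ with $0\leqslant R(s)$ for all $s$ and $\sum_s R(s)\leqslant I$. A lower-computable semi-POVM is a semi-POVM $R$ for which there is a total recursive $f:\mathbb{N}\times\Sigma^*\to\mathrm{Her}_Q(N)$ with $\lim_{n}f(n,s)=R(s)$ and $f(n,s)\leqslant R(s)$ for all $n,s$. A universal semi-POVM is a lower-computable semi-POVM $M$ such that for every lower-computable semi-POVM $R$ there is $c>0$ with $c\,R(s)\leqslant M(s)$ for all $s\in\Sigma^*$. *)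

(* Defs.v *)
From HB Require Import structures.
From mathcomp Require Import all_boot all_order all_algebra.
From mathcomp Require Import all_classical all_reals.
From mathcomp Require Import topology normedtype sequences esum.
From mathcomp Require Import complex.

Set Implicit Arguments.
Unset Strict Implicit.
Unset Printing Implicit Defensive.

Import Order.TTheory GRing.Theory Num.Theory.
Import numFieldNormedType.Exports.
Local Open Scope ring_scope.
Local Open Scope classical_set_scope.

Inductive rcode : Type :=
| RZero : rcode
| RSucc : rcode
| RProj : nat -> rcode
| RComp : rcode -> seq rcode -> rcode
| RPrec : rcode -> rcode -> rcode
| RMu   : rcode -> rcode.

Inductive reval : rcode -> seq nat -> nat -> Prop :=
| ev_zero xs : reval RZero xs 0
| ev_succ x xs : reval RSucc (x :: xs) x.+1
| ev_proj i xs : reval (RProj i) xs (nth 0 xs i)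
| ev_comp f gs xs ys y :
    revals gs xs ys -> reval f ys y -> reval (RComp f gs) xs y
| ev_prec0 g h xs y : reval g xs y -> reval (RPrec g h) (0 :: xs) y
| ev_precS g h n xs z y :
    reval (RPrec g h) (n :: xs) z -> reval h (n :: z :: xs) y ->
    reval (RPrec g h) (n.+1 :: xs) y
| ev_mu f xs n (vs : nat -> nat) :
    reval f (n :: xs) 0 ->
    (forall k, (k < n)%N -> vs k <> 0%N /\ reval f (k :: xs) (vs k)) ->
    reval (RMu f) xs n
with revals : seq rcode -> seq nat -> seq nat -> Prop :=
| evs_nil xs : revals [::] xs [::]
| evs_cons g gs xs y ys :
    reval g xs y -> revals gs xs ys -> revals (g :: gs) xs (y :: ys).

(* bijective base-2 numbering of finite binary strings *)
Fixpoint enc_str (s : seq bool) : nat :=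
  match s with
  | [::] => 0%N
  | b :: s' => ((enc_str s').*2 + (if b then 2 else 1))%N
  end.

(* k.+1 = 2^a * (2b+1)  |->  (a, b) : a bijection nat -> nat * nat *)
Definition unpair (k : nat) : nat * nat :=
  let a := logn 2 k.+1 in (a, ((k.+1 %/ 2 ^ a)%N)./2).

(* zig-zag decoding of integers *)
Definition dec_int (n : nat) : int :=
  if odd n then - (n.+1./2)%:Z else (n./2)%:Z.

Definition dec_rat (k : nat) : rat :=
  let: (a, b) := unpair k in (dec_int a)%:~R / (b.+1)%:R.

Definition total_recursive_rat (F : nat -> seq bool -> rat) : Prop :=
  exists c : rcode, forall n s, exists k,
    reval c [:: n; enc_str s] k /\ dec_rat k = F n s.

Section Defs.
Variable R : realType.

Definition semi_measure (r : seq bool -> R) : Prop :=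
  (forall s, 0 <= r s) /\ (\esum_(s in [set: seq bool]) (r s)%:E <= 1)%E.

Definition lower_computable_semimeasure (r : seq bool -> R) : Prop :=
  semi_measure r /\
  exists F : nat -> seq bool -> rat,
    total_recursive_rat F /\
    (forall n s, F n s <= F n.+1 s) /\
    (forall s, (fun n => (ratr (F n s) : R)) @ \oo --> r s).

Definition universal_probability (m : seq bool -> R) : Prop :=
  lower_computable_semimeasure m /\
  forall r, lower_computable_semimeasure r ->
    exists2 c : R, 0 < c & forall s, c * r s <= m s.

Local Open Scope complex_scope.

Definition adjmx (N : nat) (A : 'M[R[i]]_N) : 'M[R[i]]_N :=
  (map_mx (fun z : R[i] => z^*) A)^T.

Definition hermitian (N : nat) (A : 'M[R[i]]_N) : Prop := adjmx A = A.

(* positive semi-definite (in the order of R[i], 0 <= z means z is real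
   and nonnegative) *)
Definition psd (N : nat) (A : 'M[R[i]]_N) : Prop :=
  hermitian A /\
  forall v : 'cV[R[i]]_N,
    0 <= ((map_mx (fun z : R[i] => z^*) v)^T *m A *m v) 0 0.

Definition loewner_le (N : nat) (A B : 'M[R[i]]_N) : Prop := psd (B - A).

Definition semiPOVM (N : nat) (M : seq bool -> 'M[R[i]]_N) : Prop :=
  (forall s, loewner_le 0 (M s)) /\
  forall S : seq (seq bool), uniq S ->
    loewner_le (\sum_(s <- S) M s) 1%:M.

Definition qi (a b : rat) : R[i] := (ratr a : R) +i* (ratr b : R).

(* F : nat * Sigma^* -> Her_Q(N) is total recursive: a single program c
   computes, on input (n, s, i, j, p), the real (p = 0) resp. imaginary
   (p = 1) part of the entry (i, j) of F n s. *)
Definition total_recursive_herQ (N : nat)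
    (F : nat -> seq bool -> 'M[R[i]]_N) : Prop :=
  (forall n s, hermitian (F n s)) /\
  exists c : rcode, forall n s (i j : 'I_N), exists kr ki,
    reval c [:: n; enc_str s; (i : nat); (j : nat); 0%N] kr /\
    reval c [:: n; enc_str s; (i : nat); (j : nat); 1%N] ki /\
    F n s i j = qi (dec_rat kr) (dec_rat ki).

Definition lower_computable_semiPOVM (N : nat)
    (M : seq bool -> 'M[R[i]]_N) : Prop :=
  semiPOVM M /\
  exists F : nat -> seq bool -> 'M[R[i]]_N,
    total_recursive_herQ F /\
    (forall s (i j : 'I_N),
        (fun n => Re (F n s i j)) @ \oo --> Re (M s i j) /\
        (fun n => Im (F n s i j)) @ \oo --> Im (M s i j)) /\
    (forall n s, loewner_le (F n s) (M s)).

Definition universal_semiPOVM (N : nat) (M : seq bool -> 'M[R[i]]_N) : Prop :=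
  lower_computable_semiPOVM M /\
  forall Q : seq bool -> 'M[R[i]]_N, lower_computable_semiPOVM Q ->
    exists2 c : R, 0 < c & forall s, loewner_le (c%:C *: Q s) (M s).

End Defs.

(* Main.v *)
Require Import Defs.
From HB Require Import structures.
From mathcomp Require Import all_boot all_order all_algebra.
From mathcomp Require Import all_classical all_reals.
From mathcomp Require Import complex.
From mathcomp Require Import ereal topology normedtype sequences esum ring.
Import Order.TTheory GRing.Theory Num.Theory.
Import numFieldNormedType.Exports.
Set Implicit Arguments.
Unset Strict Implicit.
Unset Printing Implicit Defensive.

Section RecLib.

Definition computes (c : rcode) (f : seq nat -> nat) := forall xs, reval c xs (f xs).
Notation a0 xs := (nth 0%N xs 0).
Notation a1 xs := (nth 0%N xs 1).
Notation a2 xs := (nth 0%N xs 2).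

Lemma c_zero : computes RZero (fun _ => 0%N).
Proof. move=> xs; exact: ev_zero. Qed.
Lemma c_proj i : computes (RProj i) (fun xs => nth 0%N xs i).
Proof. move=> xs; exact: ev_proj. Qed.

Lemma c_comp1 f F g G : computes f F -> computes g G ->
  computes (RComp f [:: g]) (fun xs => F [:: G xs]).
Proof. move=> hf hg xs; apply: ev_comp (hf _); do ! constructor; auto. Qed.
Lemma c_comp2 f F g G g' G' : computes f F -> computes g G -> computes g' G' ->
  computes (RComp f [:: g; g']) (fun xs => F [:: G xs; G' xs]).
Proof. move=> hf hg hg' xs; apply: ev_comp (hf _); do ! constructor; auto. Qed.
Lemma c_comp3 f F g G g' G' g'' G'' : computes f F -> computes g G -> computes g' G' ->
  computes g'' G'' ->
  computes (RComp f [:: g; g'; g'']) (fun xs => F [:: G xs; G' xs; G'' xs]).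
Proof. move=> hf hg hg' hg'' xs; apply: ev_comp (hf _); do ! constructor; auto. Qed.

Lemma c_succ : computes (RComp RSucc [:: RProj 0]) (fun xs => (a0 xs).+1).
Proof. move=> xs; apply: (@ev_comp _ _ _ [:: a0 xs]); [by do ! constructor| exact: ev_succ]. Qed.

Fixpoint rcst (n : nat) : rcode :=
  if n is n'.+1 then RComp RSucc [:: rcst n'] else RZero.
Lemma c_rcst n : computes (rcst n) (fun _ => n).
Proof.
elim: n => [|n IH] xs /=; first exact: ev_zero.
apply: (@ev_comp _ _ _ [:: n]); [apply: evs_cons; [exact: IH| exact: evs_nil] | exact: ev_succ].
Qed.

Fixpoint precf (G : nat -> nat) (H : nat -> nat -> nat -> nat) n y :=
  if n is n'.+1 then H n' (precf G H n' y) y else G y.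

Lemma c_prec g G h H :
  computes g (fun xs => G (a0 xs)) ->
  computes h (fun xs => H (a0 xs) (a1 xs) (a2 xs)) ->
  computes (RComp (RPrec g h) [:: RProj 0; RProj 1])
    (fun xs => precf G H (a0 xs) (a1 xs)).
Proof.
move=> hg hh xs; apply: ev_comp; first by do ! constructor.
elim: (a0 xs) => [|n IH] /=; first by apply: ev_prec0; apply: hg.
apply: ev_precS IH _; exact: hh.
Qed.

Lemma computes_ext c f g : computes c f -> (forall xs, f xs = g xs) -> computes c g.
Proof. by move=> h e xs; rewrite -e. Qed.

Lemma ap1 f (F : nat -> nat) g G : computes f (fun xs => F (a0 xs)) -> computes g G ->
  computes (RComp f [:: g]) (fun xs => F (G xs)).
Proof. move=> hf hg; exact: (c_comp1 hf hg). Qed.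
Lemma ap2 f (F : nat -> nat -> nat) g G h H :
  computes f (fun xs => F (a0 xs) (a1 xs)) -> computes g G -> computes h H ->
  computes (RComp f [:: g; h]) (fun xs => F (G xs) (H xs)).
Proof. move=> hf hg hh; exact: (c_comp2 hf hg hh). Qed.
Lemma ap3 f (F : nat -> nat -> nat -> nat) g G h H k K :
  computes f (fun xs => F (a0 xs) (a1 xs) (a2 xs)) -> computes g G -> computes h H ->
  computes k K ->
  computes (RComp f [:: g; h; k]) (fun xs => F (G xs) (H xs) (K xs)).
Proof. move=> hf hg hh hk; exact: (c_comp3 hf hg hh hk). Qed.

Definition P0 := RProj 0. Definition P1 := RProj 1. Definition P2 := RProj 2.
Lemma cP0 : computes P0 (fun xs => a0 xs). Proof. exact: c_proj. Qed.
Lemma cP1 : computes P1 (fun xs => a1 xs). Proof. exact: c_proj. Qed.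
Lemma cP2 : computes P2 (fun xs => a2 xs). Proof. exact: c_proj. Qed.

Definition mkprec g h := RComp (RPrec g h) [:: P0; P1].

Definition SUCC := RComp RSucc [:: P0].
Lemma cSUCC : computes SUCC (fun xs => (a0 xs).+1). Proof. exact: c_succ. Qed.

Definition ADD := mkprec P0 (RComp SUCC [:: P1]).
Lemma cADD : computes ADD (fun xs => a0 xs + a1 xs)%N.
Proof.
apply: computes_ext (c_prec (G := id) (H := fun _ z _ => z.+1) cP0 _) _.
  exact: ap1 cSUCC cP1.
by move=> xs /=; elim: (a0 xs) => //= n ->.
Qed.

Definition MUL := mkprec RZero (RComp ADD [:: P1; P2]).
Lemma cMUL : computes MUL (fun xs => a0 xs * a1 xs)%N.
Proof.
apply: computes_ext (c_prec (G := fun _ => 0%N) (H := fun _ z y => z + y)%N c_zero _) _.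
  exact: ap2 cADD cP1 cP2.
by move=> xs /=; elim: (a0 xs) => //= n ->; rewrite mulSn addnC.
Qed.

Definition PRED := RComp (mkprec RZero P0) [:: P0; P0].
Lemma cPRED : computes PRED (fun xs => (a0 xs).-1).
Proof.
apply: computes_ext (ap2 (F := precf (fun _ => 0%N) (fun n _ _ => n))
   (c_prec c_zero cP0) cP0 cP0) _.
by move=> xs; case: (a0 xs).
Qed.

Definition SUB := RComp (mkprec P0 (RComp PRED [:: P1])) [:: P1; P0].
Lemma cSUB : computes SUB (fun xs => a0 xs - a1 xs)%N.
Proof.
apply: computes_ext (ap2 (F := precf id (fun _ z _ => z.-1))
   (c_prec cP0 (ap1 cPRED cP1)) cP1 cP0) _.
by move=> xs /=; elim: (a1 xs) => [|n IH] /=; rewrite ?subn0 // IH subnS.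
Qed.

Definition isz (x : nat) : nat := nat_of_bool (x == 0%N).
Definition lef (x y : nat) : nat := nat_of_bool (x <= y)%N.
Definition eqf (x y : nat) : nat := nat_of_bool (x == y)%N.
Definition ite (b x y : nat) : nat := if b != 0%N then x else y.
Definition divf (x d : nat) : nat := (x %/ (d + isz d))%N.
Definition oddf (x : nat) : nat := nat_of_bool (odd x).
Definition ISZ := RComp (mkprec (rcst 1) RZero) [:: P0; P0].
Lemma cISZ : computes ISZ (fun xs => isz (a0 xs)).
Proof.
apply: computes_ext (ap2 (F := precf (fun _ => 1%N) (fun _ _ _ => 0%N))
   (c_prec (c_rcst 1) c_zero) cP0 cP0) _.
by move=> xs; case: (a0 xs).
Qed.

Definition LE := RComp ISZ [:: SUB].
Lemma cLE : computes LE (fun xs => lef (a0 xs) (a1 xs)).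
Proof.
apply: computes_ext (ap1 cISZ cSUB) _ => xs.
by rewrite /isz /lef /= subn_eq0.
Qed.

Definition EQ := RComp MUL [:: LE; RComp LE [:: P1; P0]].
Lemma cEQ : computes EQ (fun xs => eqf (a0 xs) (a1 xs)).
Proof.
apply: computes_ext (ap2 cMUL cLE (ap2 cLE cP1 cP0)) _ => xs /=.
by rewrite /eqf /lef eqn_leq; case: (_ <= _)%N; case: (_ <= _)%N.
Qed.

Definition ITE := RComp ADD [:: RComp MUL [:: RComp ISZ [:: ISZ]; P1];
                                RComp MUL [:: ISZ; P2]].
Lemma cITE : computes ITE (fun xs => ite (a0 xs) (a1 xs) (a2 xs)).
Proof.
apply: computes_ext (ap2 cADD (ap2 cMUL (ap1 cISZ cISZ) cP1) (ap2 cMUL cISZ cP2)) _.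
by move=> xs /=; rewrite /ite /isz; case: (a0 xs) => /= [|n]; rewrite ?mul1n ?mul0n ?addn0.
Qed.

Definition POW2 := RComp (mkprec (rcst 1) (RComp ADD [:: P1; P1])) [:: P0; P0].
Lemma cPOW2 : computes POW2 (fun xs => 2 ^ a0 xs)%N.
Proof.
apply: computes_ext (ap2 (F := precf (fun _ => 1%N) (fun _ z _ => z + z)%N)
   (c_prec (c_rcst 1) (ap2 cADD cP1 cP1)) cP0 cP0) _.
by move=> xs /=; move: {2}(a0 xs) => y; elim: (a0 xs) => //= n ->; rewrite expnS mul2n addnn.
Qed.

Definition ODD := RComp (mkprec RZero (RComp ISZ [:: P1])) [:: P0; P0].
Lemma cODD : computes ODD (fun xs => oddf (a0 xs)).
Proof.
apply: computes_ext (ap2 (F := precf (fun _ => 0%N) (fun _ z _ => nat_of_bool (z == 0%N)))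
   (c_prec c_zero (ap1 cISZ cP1)) cP0 cP0) _.
by move=> xs; rewrite /oddf /=; move: {2}(a0 xs) => y; elim: (a0 xs) => //= n ->; case: (odd n).
Qed.

Lemma c_mu f (F : nat -> seq nat -> nat) (G : seq nat -> nat) :
  computes f (fun xs => F (a0 xs) (behead xs)) ->
  (forall xs, F (G xs) xs = 0%N) ->
  (forall xs k, (k < G xs)%N -> F k xs <> 0%N) ->
  computes (RMu f) G.
Proof.
move=> hf h0 hk xs; apply: (@ev_mu _ _ _ (fun k => F k xs)).
  by move: (hf (G xs :: xs)); rewrite /= h0.
by move=> k lt; split; [exact: hk | move: (hf (k :: xs))].
Qed.

(* division; total by replacing 0 with 1 *)
Definition DIVF := RComp LE [:: RComp MUL [:: SUCC; RComp ADD [:: P2; RComp ISZ [:: P2]]]; P1].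
Definition DIV := RMu DIVF.
Lemma cDIV : computes DIV (fun xs => divf (a0 xs) (a1 xs)).
Proof.
apply: (c_mu (F := fun q xs => lef (q.+1 * (a1 xs + isz (a1 xs))) (a0 xs))%N).
- apply: computes_ext (ap2 cLE (ap2 cMUL cSUCC (ap2 cADD cP2 (ap1 cISZ cP2))) cP1) _.
  by case=> [|q [|x [|d xs]]].
- move=> xs; rewrite /divf /lef; set D := (_ + _)%N.
  have D0 : (0 < D)%N by rewrite /D /isz; case: (a1 xs).
  by rewrite leqNgt ltn_ceil.
- move=> xs k lt; rewrite /divf /lef; set D := (_ + _)%N.
  have D0 : (0 < D)%N by rewrite /D /isz; case: (a1 xs).
  suff -> : (k.+1 * D <= a0 xs)%N by [].
  by apply: leq_trans (leq_trunc_div _ D); rewrite leq_mul2r lt orbT.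
Qed.

Definition la (k : nat) := logn 2 k.+1.
Definition bb (k : nat) := (k.+1 %/ 2 ^ (la k).+1)%N.
Definition mg (k : nat) := ((la k).+1 %/ 2)%N.
Definition ng (k : nat) := oddf (la k).

Lemma isz_pos d : (0 < d)%N -> isz d = 0%N.
Proof. by case: d. Qed.
Lemma divfE x d : (0 < d)%N -> divf x d = (x %/ d)%N.
Proof. by move=> d0; rewrite /divf isz_pos ?addn0. Qed.

Definition LOGF := RComp EQ [:: RComp MUL [:: RComp POW2 [:: SUCC];
     RComp DIV [:: RComp SUCC [:: P1]; RComp POW2 [:: SUCC]]]; RComp SUCC [:: P1]].
Definition LOGA := RMu LOGF.
Lemma cLOGA : computes LOGA (fun xs => la (a0 xs)).
Proof.
apply: (c_mu (F := fun a xs => eqf (2 ^ a.+1 * divf (a0 xs).+1 (2 ^ a.+1)) (a0 xs).+1)%N).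
- apply: computes_ext (ap2 cEQ (ap2 cMUL (ap1 cPOW2 cSUCC)
     (ap2 cDIV (ap1 cSUCC cP1) (ap1 cPOW2 cSUCC))) (ap1 cSUCC cP1)) _.
  by case=> [|a [|k xs]].
- move=> xs; rewrite divfE ?expn_gt0 // /eqf mulnC -dvdn_eq.
  by rewrite pfactor_dvdn // ltnn.
- move=> xs k lt; rewrite divfE ?expn_gt0 // /eqf mulnC -dvdn_eq.
  by rewrite pfactor_dvdn // lt.
Qed.

Definition BB := RComp DIV [:: SUCC; RComp POW2 [:: RComp SUCC [:: LOGA]]].
Lemma cBB : computes BB (fun xs => bb (a0 xs)).
Proof.
apply: computes_ext (ap2 cDIV cSUCC (ap1 cPOW2 (ap1 cSUCC cLOGA))) _ => xs.
by rewrite divfE ?expn_gt0.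
Qed.
Definition MG := RComp DIV [:: RComp SUCC [:: LOGA]; rcst 2].
Lemma cMG : computes MG (fun xs => mg (a0 xs)).
Proof. exact: computes_ext (ap2 cDIV (ap1 cSUCC cLOGA) (c_rcst 2)) _. Qed.
Definition NG := RComp ODD [:: LOGA].
Lemma cNG : computes NG (fun xs => ng (a0 xs)).
Proof. exact: ap1 cODD cLOGA. Qed.

Local Open Scope ring_scope.

Definition sval (k : nat) : rat :=
  (if ng k != 0%N then - (mg k)%:R else (mg k)%:R) / (bb k).+1%:R.

Lemma dec_ratE k : dec_rat k = sval k.
Proof.
rewrite /dec_rat /unpair /sval /bb /mg /ng /oddf -/(la k).
congr (_ / _).
  rewrite /dec_int divn2; case hodd: (odd (la k)) => /=.
    by rewrite intrN.
  by rewrite uphalf_half hodd.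
by rewrite -divn2 -divnMA -expnSr.
Qed.

Definition leqc (k1 k2 : nat) : nat :=
  ite (ng k1) (ite (ng k2) (lef (mg k2 * (bb k1).+1) (mg k1 * (bb k2).+1)) 1)
              (ite (ng k2) 0 (lef (mg k1 * (bb k2).+1) (mg k2 * (bb k1).+1))).

Lemma mg_pos k : ng k != 0%N -> (0 < mg k)%N.
Proof.
rewrite /ng /mg /oddf divn2; case: (la k) => // n.
Qed.

Lemma leqcP k1 k2 : (leqc k1 k2 != 0%N) = (dec_rat k1 <= dec_rat k2).
Proof.
rewrite !dec_ratE /sval ler_pdivrMr ?ltr0Sn // mulrAC ler_pdivlMr ?ltr0Sn //.
rewrite /leqc /ite /lef.
have := @mg_pos k1; have := @mg_pos k2.
case: (ng k1 != 0%N); case: (ng k2 != 0%N) => /= h2 h1.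
all: first
 [ by rewrite !mulNr lerN2 -!natrM ler_nat; case: (_ <= _)%N
 | by rewrite mulNr (@le_trans _ _ 0) // ?oppr_le0 // mulr_ge0
 | rewrite mulNr; apply/esym/negbTE; rewrite -ltNge;
   rewrite (@lt_le_trans _ _ 0) // ?oppr_lt0 ?mulr_gt0 ?ltr0n ?h2 //; by rewrite mulr_ge0
 | by rewrite -!natrM ler_nat; case: (_ <= _)%N ].
Qed.

Definition LEQC :=
  RComp ITE [:: RComp NG [:: P0];
     RComp ITE [:: RComp NG [:: P1];
        RComp LE [:: RComp MUL [:: RComp MG [:: P1]; RComp SUCC [:: RComp BB [:: P0]]];
                     RComp MUL [:: RComp MG [:: P0]; RComp SUCC [:: RComp BB [:: P1]]]];
        rcst 1];
     RComp ITE [:: RComp NG [:: P1]; RZero;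
        RComp LE [:: RComp MUL [:: RComp MG [:: P0]; RComp SUCC [:: RComp BB [:: P1]]];
                     RComp MUL [:: RComp MG [:: P1]; RComp SUCC [:: RComp BB [:: P0]]]]]].
Lemma cLEQC : computes LEQC (fun xs => leqc (a0 xs) (a1 xs)).
Proof.
have b0 := ap1 cBB cP0; have b1 := ap1 cBB cP1.
have m0 := ap1 cMG cP0; have m1 := ap1 cMG cP1.
exact: (ap3 cITE (ap1 cNG cP0)
   (ap3 cITE (ap1 cNG cP1) (ap2 cLE (ap2 cMUL m1 (ap1 cSUCC b0)) (ap2 cMUL m0 (ap1 cSUCC b1)))
      (c_rcst 1))
   (ap3 cITE (ap1 cNG cP1) c_zero (ap2 cLE (ap2 cMUL m0 (ap1 cSUCC b1)) (ap2 cMUL m1 (ap1 cSUCC b0))))).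
Qed.

Definition maxc (k1 k2 : nat) : nat := ite (leqc k1 k2) k2 k1.
Definition MAXC := RComp ITE [:: LEQC; P1; P0].
Lemma cMAXC : computes MAXC (fun xs => maxc (a0 xs) (a1 xs)).
Proof. exact: (ap3 cITE cLEQC cP1 cP0). Qed.

Lemma maxcE k1 k2 : dec_rat (maxc k1 k2) = Num.max (dec_rat k1) (dec_rat k2).
Proof.
rewrite /maxc /ite leqcP; case: leP => //.
Qed.

End RecLib.

Section FileMat.
Local Open Scope ring_scope.
Local Open Scope complex_scope.

Section Mat.
Variables (R : realType) (N : nat).
Implicit Types (A B : 'M[R[i]]_N) (v x y : 'cV[R[i]]_N).

Definition vadj v : 'rV[R[i]]_N := (map_mx conjc v)^T.
Definition qf A v : R[i] := (vadj v *m A *m v) 0 0.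
Definition nv v : R[i] := \sum_j conjc (v j 0) * v j 0.

Lemma vadjD x y : vadj (x + y) = vadj x + vadj y.
Proof. by apply/matrixP => i j; rewrite !mxE rmorphD. Qed.
Lemma vadjN x : vadj (- x) = - vadj x.
Proof. by apply/matrixP => i j; rewrite !mxE rmorphN. Qed.
Lemma vadjZ a x : vadj (a *: x) = conjc a *: vadj x.
Proof. by apply/matrixP => i j; rewrite !mxE rmorphM. Qed.

Lemma qfD A B v : qf (A + B) v = qf A v + qf B v.
Proof. by rewrite /qf mulmxDr mulmxDl mxE. Qed.
Lemma qfN A v : qf (- A) v = - qf A v.
Proof. by rewrite /qf mulmxN mulNmx mxE. Qed.
Lemma qfB A B v : qf (A - B) v = qf A v - qf B v.
Proof. by rewrite qfD qfN. Qed.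
Lemma qfZ a A v : qf (a *: A) v = a * qf A v.
Proof. by rewrite /qf -scalemxAr -scalemxAl mxE. Qed.
Lemma qf1 v : qf 1%:M v = nv v.
Proof.
rewrite /qf mulmx1 /nv mxE; apply: eq_bigr => j _; rewrite !mxE.
by [].
Qed.

Lemma qf_vZ A a x : qf A (a *: x) = conjc a * a * qf A x.
Proof.
by rewrite /qf vadjZ -scalemxAl -scalemxAl -scalemxAr !mxE mulrA.
Qed.

Definition bf A x y : R[i] := (vadj x *m A *m y) 0 0.
Lemma qfDv A x y : qf A (x + y) = qf A x + bf A x y + bf A y x + qf A y.
Proof.
rewrite /qf /bf vadjD !(mulmxDl, mulmxDr) !mxE; ring.
Qed.
Lemma qfNv A x : qf A (- x) = qf A x.
Proof. by rewrite /qf vadjN mulNmx mulmxN mulNmx opprK. Qed.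
Lemma bfN A x y : bf A x (- y) = - bf A x y.
Proof. by rewrite /bf mulmxN mxE. Qed.
Lemma bfNl A x y : bf A (- x) y = - bf A x y.
Proof. by rewrite /bf vadjN !mulNmx mxE. Qed.

Lemma qf_par A x y : qf A (x + y) + qf A (x - y) = 2%:R * qf A x + 2%:R * qf A y.
Proof.
rewrite !qfDv qfNv bfN bfNl.
set a := qf A x; set b := bf A x y; set c := bf A y x; set d := qf A y.
by rewrite !mulr_natl !mulr2n; ring.
Qed.

Lemma qf_delta A j : qf A (delta_mx j 0) = A j j.
Proof.
rewrite /qf !mxE (bigD1 j) //= big1 => [|k kj]; last first.
  by rewrite !mxE eqxx andbT (negbTE kj) mulr0.
rewrite addr0 !mxE (bigD1 j) //= big1 => [|k kj]; last first.
  by rewrite !mxE eqxx andbT (negbTE kj) conjc0 mul0r.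
by rewrite addr0 !mxE !eqxx conjc1 mul1r mulr1.
Qed.

Lemma psd_qf A v : psd A -> 0 <= qf A v.
Proof. by case=> _ /(_ v). Qed.

Lemma psd_diag A j : psd A -> 0 <= A j j.
Proof. by move=> /(psd_qf (delta_mx j 0)); rewrite qf_delta. Qed.

Lemma qf_add_le A x y : psd A -> qf A (x + y) <= 2%:R * qf A x + 2%:R * qf A y.
Proof.
move=> pA; rewrite -qf_par lerDl; exact: psd_qf.
Qed.

Lemma qf_sum_le A (I : Type) (r : seq I) (F : I -> 'cV[R[i]]_N) : psd A ->
  qf A (\sum_(j <- r) F j) <= 2%:R ^+ (size r) * \sum_(j <- r) qf A (F j).
Proof.
move=> pA; elim: r => [|a r IH].
  by rewrite !big_nil /qf mulmx0 mxE mulr0.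
rewrite !big_cons /= (le_trans (qf_add_le _ _ pA)) //.
rewrite exprS -mulrA mulrDr mulrDr lerD //.
  rewrite ler_wpM2l // ?ler0n // -[leLHS]mul1r ler_wpM2r ?psd_qf //.
  by rewrite exprn_ege1 // ler1n.
by rewrite ler_wpM2l // ler0n.
Qed.

Lemma nv_ge0 v : 0 <= nv v.
Proof. by apply: sumr_ge0 => j _; rewrite mulrC mulcJ_ge0. Qed.

Lemma nv_ge v j : conjc (v j 0) * v j 0 <= nv v.
Proof.
rewrite /nv (bigD1 j) //= lerDl; apply: sumr_ge0 => k _.
by rewrite mulrC mulcJ_ge0.
Qed.

Lemma qf_bound A v : psd A ->
  qf A v <= 2%:R ^+ N * (\sum_j A j j) * nv v.
Proof.
move=> pA.
have ev : v = \sum_j (v j 0 *: delta_mx j 0).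
  apply/matrixP => i k; rewrite summxE (bigD1 i) //= big1 => [|j ji].
    by rewrite !mxE (ord1 k) !eqxx mulr1 addr0.
  by rewrite !mxE (ord1 k) eqxx andbT eq_sym (negbTE ji) mulr0.
rewrite {1}ev.
apply: (le_trans (qf_sum_le _ _ pA)).
have -> : size (index_enum 'I_N) = N by rewrite /index_enum unlock -enumT size_enum_ord.
rewrite -mulrA ler_wpM2l ?exprn_ge0 ?ler0n // mulr_suml.
apply: ler_sum => j _; rewrite qf_vZ qf_delta mulrC.
rewrite ler_wpM2l ?psd_diag //.
exact: nv_ge.
Qed.

Lemma adjmxD A B : adjmx (A + B) = adjmx A + adjmx B.
Proof. by apply/matrixP => i j; rewrite !mxE rmorphD. Qed.
Lemma adjmxN A : adjmx (- A) = - adjmx A.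
Proof. by apply/matrixP => i j; rewrite !mxE rmorphN. Qed.
Lemma adjmxZr (a : R) A : adjmx (a%:C *: A) = a%:C *: adjmx A.
Proof. apply/matrixP => i j; rewrite !mxE; case: (A j i) => p q /=; by simpc. Qed.
Lemma adjmx1 : adjmx (1%:M : 'M[R[i]]_N) = 1%:M.
Proof.
apply/matrixP => i j; rewrite !mxE eq_sym.
by case: (i == j); [exact: conjc1 | exact: conjc0].
Qed.

Lemma hermB A B : Defs.hermitian A -> Defs.hermitian B -> Defs.hermitian (A - B).
Proof. by rewrite /Defs.hermitian adjmxD adjmxN => -> ->. Qed.
Lemma hermZ (a : R) A : Defs.hermitian A -> Defs.hermitian (a%:C *: A).
Proof. by rewrite /Defs.hermitian adjmxZr => ->. Qed.
Lemma herm1 : Defs.hermitian (1%:M : 'M[R[i]]_N).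
Proof. exact: adjmx1. Qed.
Lemma hermS (a : R) : Defs.hermitian (a%:C *: 1%:M : 'M[R[i]]_N).
Proof. exact/hermZ/herm1. Qed.

Lemma loewnerP A B : loewner_le A B <->
  Defs.hermitian (B - A) /\ forall v, qf A v <= qf B v.
Proof.
split.
  by case=> h q; split => // v; have := q v; rewrite -/(qf _ _) qfB subr_ge0.
by case=> h q; split => // v; rewrite -/(qf _ _) qfB subr_ge0.
Qed.

Lemma psd_herm A : loewner_le 0 A -> Defs.hermitian A.
Proof. by case; rewrite subr0. Qed.

End Mat.

Lemma qf0 (R : realType) (N : nat) (v : 'cV[R[i]]_N) : qf 0 v = 0.
Proof. by rewrite /qf mulmx0 mul0mx mxE. Qed.

End FileMat.

Section FileAna.
Local Open Scope ring_scope.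
Local Open Scope classical_set_scope.

Section Ana.
Variable R : realType.

Lemma mono_le_lim (u : nat -> R) (l : R) :
  (forall n, u n <= u n.+1) -> u @ \oo --> l -> forall n, u n <= l.
Proof.
move=> mu cu n.
have nd : nondecreasing_seq u by apply: homo_leq => //; exact: le_trans.
have := nondecreasing_cvgn_le nd (cvgP _ cu) n.
by rewrite (cvg_lim _ cu).
Qed.

Lemma esum_le1_sum (r : seq bool -> R) (S : seq (seq bool)) :
  (forall s, 0 <= r s) ->
  (\esum_(s in [set: seq bool]) (r s)%:E <= 1)%E -> uniq S ->
  \sum_(s <- S) r s <= 1.
Proof.
move=> r0 he uS; rewrite -lee_fin; apply: le_trans he.
rewrite -sumEFin fsbig_seq //; apply: esum_ge.
by exists [set` S] => //; split => //; exact: finite_seq.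
Qed.

Lemma sum_le1_esum (r : seq bool -> R) :
  (forall S : seq (seq bool), uniq S -> \sum_(s <- S) r s <= 1) ->
  (\esum_(s in [set: seq bool]) (r s)%:E <= 1)%E.
Proof.
move=> hS; apply: ge_ereal_sup => _ [X [finX _] <-].
rewrite fsbig_finite // sumEFin lee_fin; apply: hS.
exact: finmap.fset_uniq.
Qed.

End Ana.

End FileAna.

Section FileCvg.
Local Open Scope ring_scope.
Local Open Scope complex_scope.
Local Open Scope classical_set_scope.

Section Cvg.
Variable R : realType.
Local Notation CC := (complex_complex__canonical__Num_ClosedField R).

Lemma normC_real (x : R) : `|x%:C| = `|x|%:C.
Proof.
rewrite normc_def /= expr0n /= addr0 sqrtr_sqr //.
Qed.

Lemma cvgC (u : nat -> R) (l : R) :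
  u @ \oo --> l -> (fun n => ((u n)%:C : CC)) @ \oo --> (l%:C : CC).
Proof.
move=> cu; apply/cvgrPdist_lt => e e0.
have := e0; rewrite ltcE => /andP[/eqP ie re].
move/cvgrPdist_lt: cu => /(_ _ re); apply: filterS => n hn.
rewrite -rmorphB normC_real.
have -> : e = (complex.Re e)%:C by case: e ie {e0 re hn} => a b /= ->.
by rewrite ltcR.
Qed.

Lemma cvgRe (z : nat -> CC) (w : CC) :
  z @ \oo --> w -> (fun n => complex.Re (z n)) @ \oo --> complex.Re w.
Proof.
move=> cz; apply/cvgrPdist_lt => e e0.
have e0' : 0 < e%:C by rewrite ltcR.
move/cvgrPdist_lt: cz => /(_ _ e0'); apply: filterS => n hn.
rewrite -ltcR (le_lt_trans _ hn) //.
have -> : complex.Re w - complex.Re (z n) = complex.Re (w - z n).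
  by case: (w) => a b; case: (z n) => c d.
exact: normc_ge_Re.
Qed.

Lemma ReC (z : R[i]) : 'Re z = (complex.Re z)%:C.
Proof. by rewrite complexRe. Qed.
Lemma ImC (z : R[i]) : 'Im z = (complex.Im z)%:C.
Proof. by rewrite complexIm. Qed.

Lemma cvgReC (u : nat -> R) (l : R) :
  u @ \oo --> l -> (fun n => 'Re ((u n)%:C : R[i])) @ \oo --> 'Re (l%:C : R[i]).
Proof.
move=> cu; rewrite ReC.
have -> : (fun n => 'Re ((u n)%:C : R[i])) = (fun n => ((u n)%:C : CC)).
  by apply: funext => n; rewrite ReC.
exact: cvgC.
Qed.

Lemma cvgImC (u : nat -> R) (l : R) :
  u @ \oo --> l -> (fun n => 'Im ((u n)%:C : R[i])) @ \oo --> 'Im (l%:C : R[i]).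
Proof.
move=> cu; rewrite ImC.
have -> : (fun n => 'Im ((u n)%:C : R[i])) = (fun n => ((0:R)%:C : CC)).
  by apply: funext => n; rewrite ImC.
exact: cvg_cst.
Qed.

Lemma cvgRe' (z : nat -> R[i]) (w : R[i]) :
  (fun n => 'Re (z n)) @ \oo --> 'Re w -> (fun n => complex.Re (z n)) @ \oo --> complex.Re w.
Proof.
move=> /cvgRe; rewrite ReC /=.
by under eq_fun do rewrite ReC /=.
Qed.

End Cvg.

End FileCvg.

Section FilePart1.
Local Open Scope ring_scope.
Local Open Scope complex_scope.

Lemma dec_rat0 : dec_rat 0 = 0.
Proof. by rewrite /dec_rat /unpair logn1. Qed.

Definition cQ (cm : rcode) :=
  RComp ITE [:: RComp MUL [:: RComp EQ [:: RProj 2; RProj 3]; RComp ISZ [:: RProj 4]];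
                RComp cm [:: P0; P1]; RZero].

Lemma evQ cm n es k i j p : reval cm [:: n; es] k ->
  reval (cQ cm) [:: n; es; i; j; p] (ite (eqf i j * isz p) k 0).
Proof.
move=> hk.
apply: (@ev_comp _ _ _ [:: eqf i j * isz p; k; 0]%N); last exact: cITE.
apply: evs_cons.
  exact: (ap2 cMUL (ap2 cEQ (c_proj 2) (c_proj 3)) (ap1 cISZ (c_proj 4))).
apply: evs_cons.
  by apply: (@ev_comp _ _ _ [:: n; es]) => //; do ! constructor.
apply: evs_cons; [exact: ev_zero | exact: evs_nil].
Qed.

Section Part1.
Variables (R : realType) (N : nat).

Lemma lcsp_scalar (m : seq bool -> R) : lower_computable_semimeasure m ->
  lower_computable_semiPOVM (fun s => (m s)%:C *: (1%:M : 'M[R[i]]_N)).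
Proof.
case=> [[m0 me] [Fm [[cm hcm] [mono lim]]]].
have mle : forall n s, ratr (Fm n s) <= m s.
  move=> n s; apply: (mono_le_lim (u := fun n => ratr (Fm n s))) (lim s) n.
  by move=> k; rewrite ler_rat.
split.
  split.
    move=> s; apply/loewnerP; split; first by rewrite subr0; exact: hermS.
    by move=> v; rewrite qf0 qfZ qf1 mulr_ge0 ?ler0c ?nv_ge0.
  move=> S uS; apply/loewnerP.
  have -> : \sum_(s <- S) (m s)%:C *: (1%:M : 'M[R[i]]_N) = (\sum_(s <- S) m s)%:C *: 1%:M.
    by rewrite rmorph_sum scaler_suml.
  split; first exact/hermB/hermS/herm1.
  move=> v; rewrite qfZ qf1; apply: ler_piMl; first exact: nv_ge0.
  by rewrite lecR; apply: esum_le1_sum.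
exists (fun n s => (ratr (Fm n s) : R)%:C *: (1%:M : 'M[R[i]]_N)).
split; [|split].
- split; first by move=> n s; exact: hermS.
  exists (cQ cm) => n s i j; have [k [hk dk]] := hcm n s.
  exists (ite (eqf i j * isz 0) k 0), (ite (eqf i j * isz 1) k 0).
  split; first exact: evQ.
  split; first exact: evQ.
  rewrite !mxE /qi /isz /= muln0 /ite dec_rat0 rmorph0.
  case: (eqVneq i j) => [<-|ne].
    by rewrite /eqf eqxx /= dk mulr1.
  have -> : eqf i j = 0%N by move: ne; rewrite /eqf -val_eqE => /negbTE ->.
  by rewrite /= dec_rat0 mulr0 (rmorph0 (ratr : rat -> R)).
- move=> s i j; case: (eqVneq i j) => [<-|ne].
    rewrite !mxE eqxx mulr1; split.
      under eq_fun do rewrite !mxE eqxx mulr1.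
      exact: cvgReC.
    under eq_fun do rewrite !mxE eqxx mulr1.
    exact: cvgImC.
  rewrite !mxE (negbTE ne) mulr0; split.
    under eq_fun do rewrite !mxE (negbTE ne) mulr0.
    exact: cvg_cst.
  under eq_fun do rewrite !mxE (negbTE ne) mulr0.
  exact: cvg_cst.
- move=> n s; apply/loewnerP; split; first exact/hermB/hermS/hermS.
  move=> v; rewrite !qfZ !qf1; apply: ler_wpM2r; first exact: nv_ge0.
  by rewrite lecR.
Qed.

End Part1.

End FilePart1.

Section FilePart2.
Local Open Scope ring_scope.
Local Open Scope complex_scope.
Local Open Scope classical_set_scope.

Fixpoint runmax (K : nat -> nat) (n : nat) : nat :=
  if n is n'.+1 then maxc (runmax K n') (K n) else K 0%N.

Definition RG (c : rcode) (j : nat) :=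
  mkprec (RComp c [:: RZero; P0; rcst j; rcst j; RZero])
         (RComp MAXC [:: P1; RComp c [:: SUCC; P2; rcst j; rcst j; RZero]]).

Lemma evRG c j es (K : nat -> nat) :
  (forall n, reval c [:: n; es; j; j; 0%N] (K n)) ->
  forall n, reval (RG c j) [:: n; es] (runmax K n).
Proof.
move=> hK n.
apply: (@ev_comp _ _ _ [:: n; es]); first by do ! constructor.
elim: n => [|n IH] /=.
  apply: ev_prec0; apply: (@ev_comp _ _ _ [:: 0%N; es; j; j; 0%N]); last exact: hK.
  apply: evs_cons; first exact: ev_zero.
  apply: evs_cons; first exact: ev_proj.
  apply: evs_cons; first exact: c_rcst.
  apply: evs_cons; first exact: c_rcst.
  apply: evs_cons; [exact: ev_zero | exact: evs_nil].
apply: ev_precS IH _.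
apply: (@ev_comp _ _ _ [:: runmax K n; K n.+1]); last exact: cMAXC.
apply: evs_cons; first exact: ev_proj.
apply: evs_cons; last exact: evs_nil.
apply: (@ev_comp _ _ _ [:: n.+1; es; j; j; 0%N]); last exact: hK.
apply: evs_cons; first exact: cSUCC.
apply: evs_cons; first exact: ev_proj.
apply: evs_cons; first exact: c_rcst.
apply: evs_cons; first exact: c_rcst.
apply: evs_cons; [exact: ev_zero | exact: evs_nil].
Qed.

Section Part2.
Variables (R : realType) (N : nat).

Lemma ReD (x y : R[i]) : complex.Re (x + y) = complex.Re x + complex.Re y.
Proof. by case: x; case: y. Qed.

Lemma Re_sum (I : Type) (S : seq I) (f : I -> R[i]) :
  complex.Re (\sum_(s <- S) f s) = \sum_(s <- S) complex.Re (f s).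
Proof.
elim: S => [|a S IH]; first by rewrite !big_nil.
by rewrite !big_cons ReD IH.
Qed.

Lemma Re_le (x y : R[i]) : x <= y -> complex.Re x <= complex.Re y.
Proof. by rewrite lecE => /andP[]. Qed.

Lemma lcs_diag (M : seq bool -> 'M[R[i]]_N) (j : 'I_N) :
  lower_computable_semiPOVM M ->
  lower_computable_semimeasure (fun s => complex.Re (M s j j)).
Proof.
case=> [[M0 Msum] [F [[Fh [c hc]] [lim Fle]]]].
have FleM : forall n s, complex.Re (F n s j j) <= complex.Re (M s j j).
  move=> n s; apply: Re_le; move/loewnerP: (Fle n s) => [_ /(_ (delta_mx j 0))].
  by rewrite !qf_delta.
have hc' : forall s n, exists kr, reval c [:: n; enc_str s; (j : nat); (j : nat); 0%N] kr /\
    complex.Re (F n s j j) = ratr (dec_rat kr).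
  move=> s n; have [kr [ki [h1 [_ ->]]]] := hc n s j j.
  by exists kr.
pose K s n := proj1_sig (cid (hc' s n)).
have KP s n := proj2_sig (cid (hc' s n)).
split.
  split.
    by move=> s; move: (M0 s); rewrite /loewner_le subr0 => /(psd_diag j) /Re_le.
  apply: sum_le1_esum => S uS.
  move/loewnerP: (Msum S uS) => [_ /(_ (delta_mx j 0))].
  rewrite !qf_delta summxE => /Re_le; rewrite Re_sum mxE eqxx.
  by [].
exists (fun n s => dec_rat (runmax (K s) n)).
split; [|split].
- exists (RG c j) => n s; exists (runmax (K s) n); split => //.
  by apply: evRG => k; case: (KP s k).
- by move=> n s /=; rewrite maxcE le_max lexx.
- move=> s.
  have low : forall n, complex.Re (F n s j j) <= ratr (dec_rat (runmax (K s) n)).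
    move=> n; rewrite (proj2 (KP s n)) ler_rat.
    by case: n => [|n] //=; rewrite maxcE le_max lexx orbT.
  have up : forall n, ratr (dec_rat (runmax (K s) n)) <= complex.Re (M s j j).
    elim=> [|n IH] /=.
      by rewrite -(proj2 (KP s 0%N)).
    rewrite maxcE; case: (leP (dec_rat (runmax (K s) n)) (dec_rat (K s n.+1))) => _ //.
    by rewrite -(proj2 (KP s n.+1)).
  apply: (squeeze_cvgr (f := fun n => complex.Re (F n s j j)) (h := fun _ => complex.Re (M s j j))).
  + by apply: nearW => n; rewrite low up.
  + exact: cvgRe' (proj1 (lim s j j)).
  + exact: cvg_cst.
Qed.

End Part2.

End FilePart2.

Local Open Scope ring_scope.
Local Open Scope complex_scope.

Theorem mainTheorem7 (R : realType) (N : nat) (HN : (0 < N)%N)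
    (M : seq bool -> 'M[R[i]]_N) (m : seq bool -> R) :
  universal_semiPOVM M -> universal_probability m ->
  exists2 c : R, 0 < c &
    forall s, loewner_le (c%:C *: M s) ((m s)%:C *: 1%:M) /\
              loewner_le ((c * m s)%:C *: 1%:M) (M s).
Proof.
move=> [lcM univM] [lcm univm].
have [c1 c1p hc1] := univM _ (lcsp_scalar N lcm).
have psdM : forall s, psd (M s).
  by move=> s; move: (lcM.1.1 s); rewrite /loewner_le subr0.
have hermM : forall s, Defs.hermitian (M s).
  by move=> s; apply: psd_herm; exact: lcM.1.1.
have m0 : forall s, 0 <= m s by exact: lcm.1.1.
have hj : forall j : 'I_N, {c : R | 0 < c /\ forall s, c * complex.Re (M s j j) <= m s}.
  move=> j; apply: cid; have [c cp hc] := univm _ (lcs_diag j lcM).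
  by exists c.
pose cj j := proj1_sig (hj j).
have cjp : forall j, 0 < cj j by move=> j; exact: (proj1 (proj2_sig (hj j))).
have cjm : forall j s, complex.Re (M s j j) <= (cj j)^-1 * m s.
  move=> j s; rewrite -[leLHS](mulKf (lt0r_neq0 (cjp j))) ler_wpM2l //.
    by rewrite invr_ge0 ltW.
  exact: (proj2 (proj2_sig (hj j))).
pose K := \sum_j (cj j)^-1.
have Kp : 0 < K.
  rewrite /K (bigD1 (Ordinal HN)) //= ltr_pwDl ?invr_gt0 //.
  by apply: sumr_ge0 => j _; rewrite invr_ge0 ltW.
pose c2 := (2%:R ^+ N * K)^-1.
have c2p : 0 < c2 by rewrite invr_gt0 mulr_gt0 // exprn_gt0 // ltr0n.
exists (Num.min c1 c2); first by rewrite lt_min c1p c2p.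
set c := Num.min c1 c2.
have c0 : 0 <= c by rewrite le_min !ltW.
move=> s; split.
- apply/loewnerP; split; first exact/hermB/hermZ/hermM/hermS.
  move=> v; rewrite !qfZ qf1.
  have T_le : \sum_j M s j j <= (K * m s)%:C.
    rewrite /K mulr_suml rmorph_sum; apply: ler_sum => j _.
    have -> : M s j j = (complex.Re (M s j j))%:C.
      have := psd_diag j (psdM s); rewrite lecE => /andP[/eqP ie _].
      by case: (M s j j) ie => a b /= ->.
    by rewrite lecR cjm.
  apply: (le_trans (ler_wpM2l _ (qf_bound v (psdM s)))); first by rewrite ler0c.
  have nv0 := nv_ge0 v.
  rewrite mulrA mulrA ler_wpM2r //.
  apply: (@le_trans _ _ (c%:C * 2%:R ^+ N * (K * m s)%:C)).
    rewrite ler_wpM2l // ?mulr_ge0 ?ler0c ?exprn_ge0 ?ler0n //.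
  have -> : (2%:R ^+ N : R[i]) = (2%:R ^+ N : R)%:C by rewrite rmorphXn rmorph_nat.
  rewrite -!rmorphM lecR mulrA -[leRHS]mul1r ler_wpM2r //.
  rewrite -mulrA -[leRHS](mulVf (lt0r_neq0 (mulr_gt0 (exprn_gt0 N (ltr0n _ 2)) Kp))).
  rewrite -/c2 ler_wpM2r ?mulr_ge0 ?exprn_ge0 ?ler0n ?(ltW Kp) //.
  by rewrite /c ge_min lexx orbT.
- apply/loewnerP; split; first exact/hermB/hermS/hermM.
  move=> v; rewrite qfZ qf1.
  move/loewnerP: (hc1 s) => [_ /(_ v)]; rewrite !qfZ qf1 => h.
  apply: le_trans h; rewrite rmorphM -mulrA ler_wpM2r ?mulr_ge0 ?ler0c ?nv_ge0 //.
  by rewrite lecR ge_min lexx.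
Qed.
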